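(* Let $\rho:\mathbb{Z}\to[0,\infty)$ be a weight with finite moments, i.e. $\sum_{x\in\mathbb{Z}}|x|^k\rho(x)<\infty$ for all $k\ge 0$, and let $f,g$ be polynomials satisfying the discrete Pearson equation $$f(x+1)\rho(x+1)-f(x)\rho(x)=g(x)\rho(x)\qquad (x\in\mathbb{Z})$$ (equivalently $\rho(x+1)/\rho(x)=(f(x)+g(x))/f(x+1)$ where $\rho(x)\neq 0$). Assume that $\rho(x)f(x)$ vanishes at the end points of the support of $\rho$. Define the operator on polynomials $$\mathcal{A}_{\rm l}=g(x)T+f(x)(\Delta+\nabla),$$ where $T\phi(x)=\phi(x+1)$, $\Delta\phi(x)=\phi(x+1)-\phi(x)$, $\nabla\phi(x)=\phi(x)-\phi(x-1)$. For real polynomials $\phi,\psi$ let $\langle\phi,\psi\rangle=\sum_{x\in\mathbb{Z}}\phi(x)\psi(x)\rho(x)$ and, for a weight $\omega$, $\langle\phi,\psi\rangle_{s,\omega}=\sum_{x\in\mathbb{Z}}[\phi(x)\psi(x+1)-\phi(x+1)\psi(x)]\omega(x)$. Then for all real polynomials $\phi,\psi$: (1) $\langle\mathcal{A}_{\rm l}\phi,\psi\rangle=-\langle\phi,\mathcal{A}_{\rm l}\psi\rangle$; (2) $\langle\phi,\mathcal{A}_{\rm l}\psi\rangle=\langle\phi,\psi\rangle_{s,\omega}$ with $\omega(x)=f(x+1)\rho(x+1)$.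
   Context: All sums are over the integer lattice $\mathbb{Z}$, with $\rho$ taken to be zero outside its support. *)

(* Defs.v *)
From Stdlib Require Import Reals ZArith.
From Coquelicot Require Import Coquelicot.
From mathcomp Require Import all_boot all_algebra.
From mathcomp Require Import Rstruct.

Set Implicit Arguments.
Unset Strict Implicit.

Local Open Scope R_scope.

Definition summableZ (h : Z -> R) : Prop :=
  ex_series (fun n : nat => Rabs (h (Z.of_nat n))) /\
  ex_series (fun n : nat => Rabs (h (Z.opp (Z.of_nat (S n))))).

Definition sumZ (h : Z -> R) : R :=
  Series (fun n : nat => h (Z.of_nat n)) +
  Series (fun n : nat => h (Z.opp (Z.of_nat (S n)))).

Definition pZ (p : {poly R}) : Z -> R := fun x => horner p (IZR x).

Definition Tsh (h : Z -> R) : Z -> R := fun x => h (Z.add x 1).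
Definition Dfw (h : Z -> R) : Z -> R := fun x => h (Z.add x 1) - h x.
Definition Dbw (h : Z -> R) : Z -> R := fun x => h x - h (Z.sub x 1).

Definition Al (f g phi : {poly R}) : Z -> R :=
  fun x => pZ g x * Tsh (pZ phi) x + pZ f x * (Dfw (pZ phi) x + Dbw (pZ phi) x).

Definition ipr (rho : Z -> R) (phi psi : Z -> R) : R :=
  sumZ (fun x => phi x * psi x * rho x).

Definition ips (omega : Z -> R) (phi psi : Z -> R) : R :=
  sumZ (fun x => (phi x * psi (Z.add x 1) - phi (Z.add x 1) * psi x) * omega x).

(* Main.v *)
Require Import Defs.
From Stdlib Require Import Reals ZArith Lra Lia.
From Coquelicot Require Import Coquelicot.
From mathcomp Require Import all_boot all_algebra.
From mathcomp Require Import Rstruct.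

Set Implicit Arguments.
Local Open Scope R_scope.

Lemma summable_ext h1 h2 : (forall x, h1 x = h2 x) -> summableZ h1 -> summableZ h2.
Proof.
  move=> E [H1 H2]; split.
  - by apply: ex_series_ext H1 => n; rewrite E.
  - by apply: ex_series_ext H2 => n; rewrite E.
Qed.

Lemma summable_dom h1 h2 : (forall x, Rabs (h1 x) <= Rabs (h2 x)) -> summableZ h2 -> summableZ h1.
Proof.
  move=> E [H1 H2]; split.
  - apply: ex_series_le H1 => n; rewrite /norm /= /abs /= Rabs_Rabsolu; apply E.
  - apply: ex_series_le H2 => n; rewrite /norm /= /abs /= Rabs_Rabsolu; apply E.
Qed.

Lemma summable_add h1 h2 : summableZ h1 -> summableZ h2 -> summableZ (fun x => h1 x + h2 x).
Proof.
  move=> [H1 H2] [H3 H4]; split.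
  - apply: ex_series_le (ex_series_plus _ _ H1 H3) => n.
    rewrite /norm /= /abs /= Rabs_Rabsolu; apply Rabs_triang.
  - apply: ex_series_le (ex_series_plus _ _ H2 H4) => n.
    rewrite /norm /= /abs /= Rabs_Rabsolu; apply Rabs_triang.
Qed.

Lemma summable_scal c h : summableZ h -> summableZ (fun x => c * h x).
Proof.
  move=> [H1 H2]; split.
  - apply: ex_series_ext (ex_series_scal_l (Rabs c) _ H1) => n.
    by rewrite Rabs_mult.
  - apply: ex_series_ext (ex_series_scal_l (Rabs c) _ H2) => n.
    by rewrite Rabs_mult.
Qed.

Lemma summable_shift h : summableZ h -> summableZ (fun x => h (Z.add x 1)).
Proof.
  move=> [H1 H2]; split.
  - apply ex_series_incr_1 in H1.
    apply: ex_series_ext H1 => n; congr (Rabs (h _)); lia.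
  - apply/ex_series_incr_1.
    apply: ex_series_ext H2 => n; congr (Rabs (h _)); lia.
Qed.

Lemma sumZ_ext h1 h2 : (forall x, h1 x = h2 x) -> sumZ h1 = sumZ h2.
Proof.
  move=> E; rewrite /sumZ; congr (_ + _); apply Series_ext => n; by rewrite E.
Qed.

Lemma exs1 h : summableZ h -> ex_series (fun n : nat => h (Z.of_nat n)).
Proof. by case=> H _; apply: ex_series_Rabs. Qed.
Lemma exs2 h : summableZ h -> ex_series (fun n : nat => h (Z.opp (Z.of_nat (S n)))).
Proof. by case=> _ H; apply: ex_series_Rabs. Qed.

Lemma sumZ_minus h1 h2 : summableZ h1 -> summableZ h2 ->
  sumZ (fun x => h1 x - h2 x) = sumZ h1 - sumZ h2.
Proof.
  move=> S1 S2; rewrite /sumZ.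
  rewrite (Series_minus _ _ (exs1 S1) (exs1 S2)) (Series_minus _ _ (exs2 S1) (exs2 S2)).
  lra.
Qed.

Lemma sumZ_shift h : summableZ h -> sumZ (fun x => h (Z.add x 1)) = sumZ h.
Proof.
  move=> Sh; rewrite /sumZ.
  have e1 := Series_incr_1 _ (exs1 Sh).
  have Sh' := summable_shift Sh.
  have e2 := Series_incr_1 _ (exs2 Sh').
  rewrite e1 e2.
  rewrite (Series_ext (fun k : nat => h (Z.add (Z.opp (Z.of_nat (S (S k)))) 1))
             (fun k : nat => h (Z.opp (Z.of_nat (S k))))); last first.
    by move=> n; congr (h _); lia.
  rewrite (Series_ext (fun k : nat => h (Z.of_nat (S k))) (fun k : nat => h (Z.add (Z.of_nat k) 1))); last first.
    by move=> n; congr (h _); lia.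
  have -> : h (Z.add (Z.opp (Z.of_nat 1)) 1) = h (Z.of_nat 0) by [].
  lra.
Qed.

Lemma core (rho : Z -> R)
  (rho_moments : forall k : nat, summableZ (fun x => Rabs (IZR x) ^ k * rho x)) :
  forall (P : {poly R}) (k : nat),
  summableZ (fun x => Rabs (IZR x) ^ k * horner P (IZR x) * rho x).
Proof.
  elim/poly_ind => [|p c IH] k.
  - apply: (@summable_dom _ (fun x => Rabs (IZR x) ^ k * rho x)) (rho_moments k) => x.
    rewrite horner0 Rmult_0_r Rmult_0_l Rabs_R0; apply Rabs_pos.
  - apply: (@summable_ext (fun x => Rabs (IZR x) ^ k * IZR x * horner p (IZR x) * rho x
                          + c * (Rabs (IZR x) ^ k * rho x))).
      move=> x; rewrite hornerMXaddC.
      change (GRing.add (GRing.mul (horner p (IZR x)) (IZR x)) c) with (horner p (IZR x) * IZR x + c).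
      ring.
    apply: summable_add; last by apply: summable_scal.
    apply: summable_dom (IH k.+1) => x.
    rewrite !Rabs_mult /= Rabs_Rabsolu.
    rewrite (Rabs_pos_eq (Rabs (IZR x) ^ k)); last by apply pow_le, Rabs_pos.
    right; ring.
Qed.

Local Open Scope ring_scope.
Definition psub1 (p : {poly R}) : {poly R} := p \Po ('X - 1).
Local Close Scope ring_scope.
Local Open Scope R_scope.
Lemma pZ_sub1 (p : {poly R}) x : pZ p (Z.sub x 1) = horner (psub1 p) (IZR x).
Proof.
  rewrite /pZ /psub1 horner_comp hornerXsubC minus_IZR //.
Qed.

Lemma hM (p q : {poly R}) y : horner (GRing.mul p q) y = horner p y * horner q y.
Proof. by rewrite hornerM. Qed.

Lemma summ3 (rho : Z -> R)
  (rho_moments : forall k : nat, summableZ (fun x => Rabs (IZR x) ^ k * rho x))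
  (p q r : {poly R}) :
  summableZ (fun x => horner p (IZR x) * horner q (IZR x) * horner r (IZR x) * rho x).
Proof.
  have S0 := @core rho rho_moments (GRing.mul (GRing.mul p q) r) 0.
  refine (@summable_ext _ _ _ S0) => x.
  rewrite !hM /=; ring.
Qed.

Theorem proposition3p6 (rho : Z -> R) (f g : {poly R})
  (rho_nonneg : forall x : Z, 0 <= rho x)
  (rho_moments : forall k : nat, summableZ (fun x => Rabs (IZR x) ^ k * rho x))
  (pearson : forall x : Z,
      pZ f (Z.add x 1) * rho (Z.add x 1) - pZ f x * rho x = pZ g x * rho x)
  (boundary : forall x : Z, rho (Z.sub x 1) = 0 -> pZ f x * rho x = 0) :
  forall phi psi : {poly R},
    ipr rho (Al f g phi) (pZ psi) = - ipr rho (pZ phi) (Al f g psi) /\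
    ipr rho (pZ phi) (Al f g psi) =
      ips (fun x => pZ f (Z.add x 1) * rho (Z.add x 1)) (pZ phi) (pZ psi).
Proof.
  move=> phi psi.
  pose A x := pZ phi (Z.sub x 1) * pZ psi x * pZ f x * rho x.
  pose B x := pZ phi x * pZ psi (Z.sub x 1) * pZ f x * rho x.
  have SA : summableZ A.
    have S0 := @summ3 rho rho_moments (psub1 phi) psi f.
    refine (@summable_ext _ _ _ S0) => x.
    by rewrite /A pZ_sub1.
  have SB : summableZ B.
    have S0 := @summ3 rho rho_moments phi (psub1 psi) f.
    refine (@summable_ext _ _ _ S0) => x.
    by rewrite /B pZ_sub1.
  have sh : forall x, Z.sub (Z.add x 1) 1 = x by move=> x; lia.
  have e2 : ipr rho (pZ phi) (Al f g psi) = sumZ (fun x => A (Z.add x 1)) - sumZ B.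
    rewrite -sumZ_minus; [|exact: summable_shift|exact: SB].
    apply: sumZ_ext => x.
    rewrite /A /B /Al /Tsh /Dfw /Dbw sh.
    have H := pearson x.
    transitivity (pZ phi x * pZ psi (Z.add x 1) * (pZ g x * rho x)
       + pZ phi x * (pZ psi (Z.add x 1) - pZ psi (Z.sub x 1)) * pZ f x * rho x); first ring.
    rewrite -H; ring.
  have e3 : ips (fun x => pZ f (Z.add x 1) * rho (Z.add x 1)) (pZ phi) (pZ psi)
            = sumZ (fun x => A (Z.add x 1)) - sumZ B.
    rewrite -(sumZ_shift SB) -sumZ_minus; [|exact: summable_shift|exact: summable_shift].
    apply: sumZ_ext => x.
    rewrite /A /B /ips sh; ring.
  have e1 : ipr rho (Al f g phi) (pZ psi) = sumZ (fun x => B (Z.add x 1)) - sumZ A.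
    rewrite -sumZ_minus; [|exact: summable_shift|exact: SA].
    apply: sumZ_ext => x.
    rewrite /A /B /Al /Tsh /Dfw /Dbw sh.
    have H := pearson x.
    transitivity (pZ phi (Z.add x 1) * pZ psi x * (pZ g x * rho x)
       + (pZ phi (Z.add x 1) - pZ phi (Z.sub x 1)) * pZ psi x * pZ f x * rho x); first ring.
    rewrite -H; ring.
  rewrite e1 e2 e3 (sumZ_shift SA) (sumZ_shift SB); split; ring.
Qed.
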